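(* Let $T,\ell$ be positive integers, $\sigma\in(0,1]$ and $\delta\in(0,1)$. Let $u_1,\dots,u_T:[0,1]\to\mathbb{R}$ be piecewise Lipschitz functions, each with $\ell$ discontinuities, and let the discontinuities $d_{i,j}$ ($i\in[T]$, $j\in[\ell]$) of the $u_i$ be sampled from an adaptive sequence of $\sigma$-smooth distributions on $[0,1]$. Then for any $\alpha\ge 0.5$, with probability at least $1-\delta$ the sequence $u_1,\dots,u_T$ is $(w,k)$-dispersed for $$w=\sigma(T\ell)^{\alpha-1}\quad\text{and}\quad k=\tilde O\!\left((T\ell)^{\alpha}\ln\!\left(\frac1\delta\right)+\ln\!\left(\frac1\sigma\right)\right).$$
   Context: A distribution $\mu$ on $[0,1]$ is $\sigma$-smooth if $\mu(A)\le \mathcal{U}(A)/\sigma$ for all measurable $A$, where $\mathcal{U}$ is the uniform (Lebesgue) distribution on $[0,1]$. An adaptive sequence of $\sigma$-smooth distributions generates the points one at a time, each from a $\sigma$-smooth distribution chosen as a function of the previously realized points. If $u_i$ is piecewise Lipschitz over a partition $\mathcal{P}_i$ of $[0,1]$ (the pieces delimited by its discontinuities), $\mathcal{P}_i$ splits a set $A$ if $A$ intersects at least two sets of $\mathcal{P}_i$; the collection $u_1,\dots,u_T$ is $(w,k)$-dispersed if every interval of width $w$ is split by at most $k$ of the partitions $\mathcal{P}_1,\dots,\mathcal{P}_T$. $\tilde O$ hides polylogarithmic factors. *)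

(* Defs.v *)
From HB Require Import structures.
From mathcomp Require Import all_boot all_order all_algebra.
From mathcomp Require Import all_classical all_reals all_analysis.
Set Implicit Arguments. Unset Strict Implicit. Unset Printing Implicit Defensive.
Import Order.TTheory GRing.Theory Num.Theory.
Import numFieldNormedType.Exports.
Local Open Scope classical_set_scope.
Local Open Scope ring_scope.

Section Dispersion.
Variable R : realType.

(* The partition P of [0,1] delimited by the discontinuity points D:
   x, y in [0,1] lie in the same piece iff no discontinuity d satisfies
   min(x,y) < d <= max(x,y)  (pieces [0,d_1), [d_1,d_2), ..., [d_l,1]). *)
Definition same_piece (D : seq R) (x y : R) : Prop :=
  forall d, d \in D -> ~ ((x < d <= y) \/ (y < d <= x)).

Definition splits (D : seq R) (A : set R) : Prop :=
  exists x y, [/\ A x, A y, 0 <= x <= 1, 0 <= y <= 1 & ~ same_piece D x y].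

Definition dispersed (T : nat) (D : 'I_T -> seq R) (w k : R) : Prop :=
  forall a : R,
    (#|[set i : 'I_T | `[< splits (D i) `[a, a + w] >] ]|%:R <= k).

(* Lexicographic order on the indices (i,j) of the discontinuities d_{i,j}:
   the order in which the adaptive sequence generates them. *)
Definition before (T l : nat) (i' : 'I_T) (j' : 'I_l) (i : 'I_T) (j : 'I_l) : bool :=
  (i' < i)%N || ((i' == i) && (j' < j)%N).

Definition past {d} {Omega : measurableType d} (T l : nat)
  (Z : 'I_T -> 'I_l -> Omega -> R) (i : 'I_T) (j : 'I_l) : set (set Omega) :=
  <<s [set E | exists i' j', before i' j' i j /\
        exists B : set R, measurable B /\ E = Z i' j' @^-1` B] >>.

(* Adaptive sequence of sigma-smooth distributions on [0,1]: conditionally on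
   the previously realized points, the law of d_{i,j} is sigma-smooth, i.e.
   P(E /\ d_{i,j} \in A) <= (U(A)/sigma) P(E) for every past event E and Borel A,
   where U(A) = Lebesgue measure of A restricted to [0,1]. *)
Definition adaptive_smooth {d} {Omega : measurableType d} (P : probability Omega R)
  (T l : nat) (Z : 'I_T -> 'I_l -> Omega -> R) (sigma : R) : Prop :=
  (forall i j, measurable_fun setT (Z i j)) /\
  forall i j (E : set Omega) (A : set R),
    past Z i j E -> measurable A ->
    (P (E `&` Z i j @^-1` A) <=
       (sigma^-1)%:E * (lebesgue_measure (A `&` `[0%R, 1%R]) * P E))%E.

End Dispersion.

(* Main.v *)
Require Import Defs.
From HB Require Import structures.
From mathcomp Require Import all_boot all_order all_algebra.
From mathcomp Require Import all_classical all_reals all_analysis.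
From mathcomp Require Import ring lra zify.
Import Order.TTheory GRing.Theory Num.Theory.
Import numFieldNormedType.Exports.
Local Open Scope classical_set_scope.
Local Open Scope ring_scope.
Definition rnk {T l : nat} (s : 'I_T * 'I_l) : nat := (s.1 * l + s.2)%N.

Lemma rnk_before (T l : nat) (s s' : 'I_T * 'I_l) :
  (rnk s' < rnk s)%N -> before s'.1 s'.2 s.1 s.2.
Proof.
case: s => i j; case: s' => i' j'; rewrite /rnk /before /=.
have := ltn_ord j; have := ltn_ord j'.
case: (ltngtP i' i) => //= [h|/val_inj ->] hj' hj hr.
  have : (i.+1 * l <= i' * l)%N by rewrite leq_mul2r h orbT.
  nia.
rewrite eqxx /=; lia.
Qed.

Lemma rnk_inj (T l : nat) (s s' : 'I_T * 'I_l) : rnk s = rnk s' -> s = s'.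
Proof.
case: s => i j; case: s' => i' j'; rewrite /rnk /= => h.
have := ltn_ord j; have := ltn_ord j'.
case: (ltngtP i' i) => [h1|h1|/val_inj e] hj' hj.
- have : (i'.+1 * l <= i * l)%N by rewrite leq_mul2r h1 orbT.
  nia.
- have : (i.+1 * l <= i' * l)%N by rewrite leq_mul2r h1 orbT.
  nia.
subst i'; congr pair; apply: val_inj => /=; lia.
Qed.

Lemma gsI (T : pointedType) (G : set (set T)) (A B : set T) :
  <<s G >> A -> <<s G >> B -> <<s G >> (A `&` B).
Proof. exact: (@measurableI _ (g_sigma_algebraType G)). Qed.

Lemma gsT (T : pointedType) (G : set (set T)) : <<s G >> [set: T].
Proof. exact: (@measurableT _ (g_sigma_algebraType G)). Qed.

Lemma past_big (R : realType) d (Omega : measurableType d) (T l : nat)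
  (Z : 'I_T -> 'I_l -> Omega -> R) (J : set R) (sm : 'I_T * 'I_l)
  (r : seq ('I_T * 'I_l)) (p : pred ('I_T * 'I_l)) :
  measurable J ->
  (forall s, p s -> before s.1 s.2 sm.1 sm.2) ->
  past Z sm.1 sm.2 (\big[setI/setT]_(s <- r | p s) (Z s.1 s.2 @^-1` J)).
Proof.
move=> mJ hp; elim: r => [|s r IH]; first by rewrite big_nil; exact: gsT.
rewrite big_cons; case: ifP => // ps.
apply: gsI => //; apply: sub_gen_smallest.
exists s.1, s.2; split; first exact: hp.
by exists J.
Qed.

Lemma hits_bound (R : realType) d (Omega : measurableType d)
  (P : probability Omega R) (T l : nat) (Z : 'I_T -> 'I_l -> Omega -> R)
  (sigma : R) (J : set R) (c : R) :
  adaptive_smooth P Z sigma -> 0 < sigma -> measurable J ->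
  (lebesgue_measure (J `&` `[0%R, 1%R]) <= c%:E)%E -> 0 <= c ->
  forall S : {set 'I_T * 'I_l},
    (P (\big[setI/setT]_(s in S) (Z s.1 s.2 @^-1` J))
       <= ((sigma^-1 * c) ^+ #|S|)%:E)%E.
Proof.
move=> [Zm Hs] s0 mJ hc c0 S.
have mH : forall s : 'I_T * 'I_l, measurable (Z s.1 s.2 @^-1` J).
  by move=> s; rewrite -[_ @^-1` _]setTI; exact: Zm.
move Hn: #|S| => n; elim: n S Hn => [|n IH] S Hn.
  move/eqP: Hn; rewrite cards_eq0 => /eqP ->.
  by rewrite big_set0 expr0; exact: probability_le1.
have : (0 < #|S|)%N by rewrite Hn.
rewrite card_gt0 => /set0Pn [x0 x0S].
case: (@arg_maxnP _ x0 (mem S) rnk x0S) => sm smS smax.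
rewrite (bigD1 sm) //= setIC.
set E := \big[setI/setT]_(s in S | s != sm) _.
have pE : past Z sm.1 sm.2 E.
  apply: past_big => // s /andP [sS ssm]; apply: rnk_before.
  rewrite ltn_neqAle; have -> : (rnk s <= rnk sm)%N := smax s sS.
  rewrite andbT; apply/negP => /eqP /rnk_inj /eqP.
  by rewrite (negbTE ssm).
have HE : (P E <= ((sigma^-1 * c) ^+ n)%:E)%E.
  have -> : E = \big[setI/setT]_(s in S :\ sm) (Z s.1 s.2 @^-1` J).
    by apply: eq_bigl => s; rewrite in_setD1 andbC.
  have smS' : sm \in S := smS.
  apply: IH; move: Hn; rewrite (cardsD1 sm S) smS' add1n; by case.
apply: le_trans; first exact: Hs.
rewrite exprS -!mulrA EFinM; apply: lee_wpmul2l; first by rewrite lee_fin invr_ge0 ltW.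
rewrite EFinM; apply: lee_pmul => //; exact: measure_ge0.
Qed.

Lemma P_bigU (R : realType) d (Omega : measurableType d) (P : probability Omega R)
  (I : Type) (r : seq I) (p : pred I) (F : I -> set Omega) :
  (forall i, measurable (F i)) ->
  (P (\big[setU/set0]_(i <- r | p i) F i) <= \sum_(i <- r | p i) P (F i))%E.
Proof.
move=> mF; elim: r => [|i r IH]; first by rewrite !big_nil measure0.
rewrite !big_cons; case: ifP => // _.
apply: le_trans; first apply: measureU2 => //; first exact: bigsetU_measurable.
exact: leeD.
Qed.

Definition badJ {R : realType} {Omega : Type} {T l : nat}
  (Z : 'I_T -> 'I_l -> Omega -> R) (J : set R) (K : nat) : set Omega :=
  \big[setU/set0]_(S : {set 'I_T * 'I_l} | #|S| == K)
     \big[setI/setT]_(s in S) (Z s.1 s.2 @^-1` J).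

Lemma badJ_measurable (R : realType) d (Omega : measurableType d) (T l : nat)
  (Z : 'I_T -> 'I_l -> Omega -> R) (J : set R) (K : nat) :
  (forall i j, measurable_fun setT (Z i j)) -> measurable J ->
  measurable (badJ Z J K).
Proof.
move=> Zm mJ; apply: bigsetU_measurable => S _; apply: bigsetI_measurable => s _.
by rewrite -[_ @^-1` _]setTI; exact: Zm.
Qed.

Lemma bad_bound (R : realType) d (Omega : measurableType d)
  (P : probability Omega R) (T l : nat) (Z : 'I_T -> 'I_l -> Omega -> R)
  (sigma : R) (J : set R) (c : R) (K : nat) :
  adaptive_smooth P Z sigma -> 0 < sigma -> measurable J ->
  (lebesgue_measure (J `&` `[0%R, 1%R]) <= c%:E)%E -> 0 <= c ->
  (P (badJ Z J K) <= ('C(T * l, K)%:R * (sigma^-1 * c) ^+ K)%:E)%E.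
Proof.
move=> hA s0 mJ hc c0.
have Zm := hA.1.
apply: le_trans; first apply: P_bigU.
  by move=> S; apply: bigsetI_measurable => s _; rewrite -[_ @^-1` _]setTI; exact: Zm.
apply: le_trans.
  apply: (@lee_sum _ _ _ (fun _ => ((sigma^-1 * c) ^+ K)%:E)) => S /eqP <-.
  exact: hits_bound.
rewrite sumEFin lee_fin.
have -> : \sum_(S : {set 'I_T * 'I_l} | #|S| == K) (sigma^-1 * c) ^+ K =
   \sum_(S in [set S : {set 'I_T * 'I_l} | #|S| == K]%SET) (sigma^-1 * c) ^+ K.
  by apply: eq_bigl => S; rewrite inE.
by rewrite sumr_const card_draws card_prod !card_ord mulr_natl.
Qed.
Lemma ffact_le_exp n m : (n ^_ m <= n ^ m)%N.
Proof.
elim: m => [|m IH]; first by rewrite ffactn0 expn0.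
rewrite ffactnSr expnS mulnC; apply: leq_mul => //; exact: leq_subr.
Qed.

Lemma fact_ge (R : realType) (K : nat) :
  (K%:R ^+ K : R) <= K`!%:R * expR K%:R.
Proof.
case: K => [|n]; first by rewrite expr0 fact0 mul1r expR0.
have h := @expR_ge1Dxn R n.+1%:R n (ler0n _ _).
have hf : (0 : R) < (n.+1)`!%:R by rewrite ltr0n fact_gt0.
have : (n.+1%:R ^+ n.+1 : R) / (n.+1)`!%:R <= expR n.+1%:R by lra.
by rewrite ler_pdivrMr // mulrC.
Qed.

Lemma binom_bound (R : realType) (N K : nat) (q : R) :
  (0 < K)%N -> 0 <= q -> expR 1 ^+ 2 * (N%:R * q) <= K%:R ->
  'C(N, K)%:R * q ^+ K <= expR (- K%:R).
Proof.
move=> K0 q0 hK.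
set e := expR (1 : R).
have e0 : 0 < e by rewrite expR_gt0.
have Kp : (0 : R) < K%:R by rewrite ltr0n.
have hC : ('C(N, K) * K`! <= N ^ K)%N by rewrite bin_ffact; exact: ffact_le_exp.
have hCR : ('C(N, K)%:R * K`!%:R : R) <= N%:R ^+ K by rewrite -natrM -natrX ler_nat.
have hKK : (0 : R) < K%:R ^+ K by rewrite exprn_gt0.
rewrite -(ler_pM2r hKK).
have eK : expR (K%:R : R) = e ^+ K by rewrite -expRM_natl mulr1.
have eNK : expR (- K%:R : R) = e^-1 ^+ K by rewrite expRN eK exprVn.
apply: (le_trans (y := 'C(N, K)%:R * q ^+ K * (K`!%:R * e ^+ K))).
  by rewrite ler_wpM2l ?mulr_ge0 ?exprn_ge0 // -eK fact_ge.
apply: (le_trans (y := (N%:R * q * e) ^+ K)).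
  rewrite !exprMn.
  have -> : 'C(N, K)%:R * q ^+ K * (K`!%:R * e ^+ K) =
    ('C(N, K)%:R * K`!%:R) * q ^+ K * e ^+ K by ring.
  apply: ler_wpM2r; first by rewrite exprn_ge0 // ltW.
  by apply: ler_wpM2r; first exact: exprn_ge0.
rewrite eNK -exprMn; apply: lerXn2r.
- rewrite nnegrE; apply: mulr_ge0; last exact: ltW.
  by apply: mulr_ge0.
- by rewrite nnegrE mulr_ge0 // invr_ge0 ltW.
rewrite mulrC ler_pdivlMl //.
by rewrite mulrA; move: hK; rewrite expr2.
Qed.
Lemma exists_subset_card (T : finType) (A : {set T}) (K : nat) :
  (K <= #|A|)%N -> exists S : {set T}, S \subset A /\ #|S| = K.
Proof.
move=> hK; exists [set x in take K (enum A)]; split.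
  apply/fintype.subsetP => x; rewrite inE => /mem_take; by rewrite mem_enum.
rewrite cardsE (card_uniqP _); last by apply: take_uniq; exact: enum_uniq.
by rewrite size_take -cardE; case: ltnP hK => // h1 h2; apply/eqP; rewrite eqn_leq h1 h2.
Qed.

Lemma mem_bigU (I : eqType) (X : Type) (r : seq I) (p : pred I) (F : I -> set X) i x :
  i \in r -> p i -> F i x -> (\big[setU/set0]_(j <- r | p j) F j) x.
Proof.
elim: r => [//|j r IH] /= hi pi Fx; rewrite big_cons.
move: hi pi Fx; rewrite inE => /orP [/eqP -> pi Fx|hi pi Fx]; first by rewrite pi; left.
by case: ifP => _; [right|]; apply: IH.
Qed.

Lemma mem_bigI (I : Type) (X : Type) (r : seq I) (p : pred I) (F : I -> set X) x :
  (forall i, p i -> F i x) -> (\big[setI/setT]_(j <- r | p j) F j) x.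
Proof.
move=> h; elim: r => [|j r IH]; first by rewrite big_nil.
by rewrite big_cons; case: ifP => // pj; split => //; apply: h.
Qed.
Theorem mainTheorem7 (R : realType) :
  exists (C : R) (p : nat), 0 < C /\
  forall (T l : nat) (sigma delta alpha : R)
         (d : measure_display) (Omega : measurableType d)
         (P : probability Omega R) (Z : 'I_T -> 'I_l -> Omega -> R),
    (0 < T)%N -> (0 < l)%N ->
    0 < sigma <= 1 -> 0 < delta < 1 -> 1 / 2 <= alpha ->
    adaptive_smooth P Z sigma ->
    let N : R := (T * l)%:R in
    let w : R := sigma * N `^ (alpha - 1) in
    let k : R := C * (N `^ alpha * (ln (1 / delta) + 1) + ln (1 / sigma))
                   * (1 + ln (N / sigma)) ^+ p in
    exists G : set Omega,
      [/\ measurable G,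
          G `<=` [set omega | dispersed (fun i => [seq Z i j omega | j <- enum 'I_l]) w k]
        & ((1 - delta)%:E <= P G)%E].
Proof.
set e := expR (1 : R).
have e0 : 0 < e by rewrite expR_gt0.
exists (2 * e ^+ 2 + 2), 1%N; split.
  by rewrite addr_gt0 // mulr_gt0 // exprn_gt0.
move=> T l sigma delta alpha d Omega P Z T0 l0 /andP[s0 s1] /andP[d0 d1] ha hA N w k.
have Zm := hA.1.
have N1 : 1 <= N by rewrite /N ler1n muln_gt0 T0 l0.
have N0 : 0 < N by apply: lt_le_trans N1.
have a0 : 0 < alpha by apply: lt_le_trans ha; rewrite divr_gt0.
have pw0 : 0 < N `^ (alpha - 1) by apply: powR_gt0.
have w0 : 0 < w by rewrite mulr_gt0.
set q := sigma^-1 * (2 * w).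
have q0 : 0 <= q by rewrite mulr_ge0 ?invr_ge0 ?ltW // mulr_gt0.
set Aa := N `^ alpha.
have A1 : 1 <= Aa by rewrite /Aa -(powRr0 N) ler_powR // ltW.
have Nq : N * q = 2 * Aa.
  rewrite /q /w /Aa -(mulr_powRB1 (ltW N0) a0); field.
  by rewrite gt_eqF.
set M := Num.trunc (w^-1).
have Mw : M%:R <= w^-1 by rewrite truncn_le invr_ge0 ltW.
have wM : w^-1 < M.+1%:R by apply: truncnS_gt.
set L := ln (N / sigma).
have L0 : 0 <= L by rewrite ln_ge0 // ler_pdivlMr // mul1r (le_trans s1).
set D := ln (1 / delta).
have D0 : 0 <= D by rewrite ln_ge0 // ler_pdivlMr // mul1r ltW.
have S0 : 0 <= ln (1 / sigma) by rewrite ln_ge0 // ler_pdivlMr // mul1r.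
set X := e ^+ 2 * (N * q) + ln (M.+1%:R / delta).
have lnM0 : 0 <= ln (M.+1%:R / delta).
  by rewrite ln_ge0 // ler_pdivlMr // mul1r (le_trans (ltW d1)) // ler1n.
have X0 : 0 <= X.
  rewrite /X Nq; apply: addr_ge0 => //; apply: mulr_ge0; last lra.
  exact: exprn_ge0 (ltW e0).
set K := (Num.trunc X).+1.
have KX : X <= K%:R by rewrite /K ltW // truncnS_gt.
have XK : (K.-1)%:R <= X by rewrite /K /= truncn_le.
have Xk : X <= k.
  have Ns1 : 1 <= N / sigma by rewrite ler_pdivlMr // mul1r (le_trans s1).
  have winv : w^-1 <= N / sigma.
    rewrite /w invfM mulrC; apply: ler_wpM2r; first by rewrite invr_ge0 ltW.
    rewrite -powRN; apply: ler1_powR => //; lra.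
  have hM1 : M.+1%:R <= 2 * (N / sigma).
    apply: (le_trans (y := w^-1 + 1)); first by rewrite -natr1 lerD2r.
    lra.
  have Mpos : (0:R) < M.+1%:R by rewrite ltr0n.
  have l2 : ln (2 : R) <= 1.
    rewrite -[X in _ <= X](expRK 1) ler_ln ?posrE ?expR_gt0 //.
    have := expR_ge1Dx (1 : R); lra.
  have hlnM : ln (M.+1%:R : R) <= 1 + L.
    apply: (le_trans (y := ln (2 * (N / sigma)))).
      by rewrite ler_ln ?posrE // mulr_gt0 // (lt_le_trans ltr01).
    rewrite lnM ?posrE; first by rewrite -/L; lra.
      by [].
    exact: (lt_le_trans ltr01 Ns1).
  have eq1 : ln (M.+1%:R / delta) = ln (M.+1%:R : R) + D.
    by rewrite /D div1r lnM ?posrE ?invr_gt0.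
  rewrite /X eq1 Nq /k expr1 /D.
  set E := e ^+ 2.
  have E0 : 0 < E by rewrite exprn_gt0.
  set Sg := ln (1 / sigma).
  fold D.
  have h1 : 1 + L + D <= (D + 1) * (1 + L) by nra.
  have h2 : (D + 1) * (1 + L) <= Aa * (D + 1) * (1 + L).
    rewrite -[X in X <= _]mul1r mulrA; apply: ler_wpM2r; first lra.
    by apply: ler_wpM2r; first lra.
  have h3 : Aa <= Aa * (D + 1) * (1 + L).
    rewrite -mulrA -[X in X <= _]mulr1; apply: ler_wpM2l; first lra.
    nra.
  have h4 : 0 <= Sg * (1 + L) by apply: mulr_ge0 => //; lra.
  have -> : (2 * E + 2) * (Aa * (D + 1) + Sg) * (1 + L) =
    (2 * E + 2) * (Aa * (D + 1) * (1 + L)) + (2 * E + 2) * (Sg * (1 + L)) by ring.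
  have h5 : 0 <= (2 * E + 2) * (Sg * (1 + L)) by apply: mulr_ge0 => //; lra.
  have h6 : E * (2 * Aa) <= 2 * E * (Aa * (D + 1) * (1 + L)).
    rewrite mulrCA mulrA; apply: ler_wpM2l; first lra. exact: h3.
  nra.
have K0 : (0 < K)%N by [].
pose J := fun m : nat => ([set` `[m%:R * w, m%:R * w + 2 * w]] : set R).
have mJ : forall m, measurable (J m) by move=> m; exact: measurable_itv.
have hJ : forall m : nat,
    (lebesgue_measure (J m `&` `[0%R, 1%R]) <= (2 * w)%:E)%E.
  move=> m; apply: le_trans.
    apply: le_measure; rewrite ?inE; last exact: subIsetl.
      by apply: measurableI => //; exact: measurable_itv.
    exact: mJ.
  have h := @lebesgue_measure_itv R `[m%:R * w, m%:R * w + 2 * w]%R.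
  move: h; rewrite /= lte_fin ifT; last lra.
  move=> h; apply: (@le_trans _ _ ((m%:R * w + 2 * w - m%:R * w)%:E)).
    by rewrite le_eqVlt; apply/orP; left; apply/eqP; exact: h.
  by rewrite lee_fin; lra.
pose Bad := \big[setU/set0]_(m < M.+1) badJ Z (J m) K.
have mBad : measurable Bad.
  by apply: bigsetU_measurable => m _; exact: badJ_measurable.
exists (~` Bad); split.
- exact: measurableC.
- move=> om /= nB a.
  set m0 := Num.trunc (a / w).
  set m := minn m0 M.
  have mM : (m < M.+1)%N by rewrite ltnS geq_minr.
  have t1 : a < m0.+1%:R * w by rewrite -ltr_pdivrMr //; apply: truncnS_gt.
  have t2 : 0 <= a -> m0%:R * w <= a.
    by move=> a0'; rewrite -ler_pdivlMr // truncn_le divr_ge0 // ltW.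
  have t3 : a < 0 -> m0 = 0%N.
    move=> an; apply/eqP; rewrite -leqn0 truncn_le_nat.
    have : a / w < 0 by rewrite pmulr_llt0 ?invr_gt0.
    lra.
  have inJ : forall x, a <= x <= a + w -> 0 <= x <= 1 -> J m x.
    move=> x /andP [ax xa] /andP [x0 x1]; rewrite /J /= in_itv /=.
    case: (leqP m0 M) => hm.
      have -> : m = m0 by apply/minn_idPl.
      have t1' : a < m0%:R * w + w by move: t1; rewrite -natr1 mulrDl mul1r.
      apply/andP; split; last lra.
      case: (ltP a 0) => an.
        by rewrite (t3 an) mul0r.
      by apply: le_trans (t2 an) ax.
    exfalso.
    have an : 0 <= a by case: (ltP a 0) => // /t3 h; move: hm; rewrite h.
    have h1 : 1 < m0%:R * w.
      have : M.+1%:R * w <= m0%:R * w by rewrite ler_pM2r // ler_nat.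
      have : 1 < M.+1%:R * w by rewrite -ltr_pdivrMr // div1r.
      lra.
    have := t2 an; lra.
  set A := [set s : 'I_T * 'I_l | `[< J m (Z s.1 s.2 om) >]]%SET.
  have AK : (#|A| < K)%N.
    rewrite ltnNge; apply/negP => /exists_subset_card [S [SA cS]].
    apply: nB; apply: (@mem_bigU _ _ _ _ _ (inord m)) => //; first exact: mem_index_enum.
    rewrite /= inordK //.
    apply: (@mem_bigU _ _ _ _ _ S); first exact: mem_index_enum.
      by rewrite cS.
    apply: mem_bigI => s sS.
    have := fintype.subsetP SA s sS; rewrite inE => /asboolP.
    by [].
  apply: le_trans Xk; apply: le_trans XK; rewrite ler_nat.
  match goal with |- context [card (mem ?S)] => have sub : S \subset (fst @: A) end.
    apply/fintype.subsetP => i; rewrite inE => /asboolP [x [y [hx hy hx01 hy01 nsp]]].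
    case: (pselect (exists dd, dd \in [seq Z i j om | j <- enum 'I_l] /\
        ((x < dd <= y) \/ (y < dd <= x)))) => [[dd [hdd hc]]|hn]; last first.
      by exfalso; apply: nsp => dd hdd hc; apply: hn; exists dd.
    case/mapP: hdd => j _ edd; subst dd.
    move: hx hy; rewrite /= !in_itv /= => /andP [ax xa] /andP [ay ya].
    case/andP: hx01 => x0 x1; case/andP: hy01 => y0 y1.
    apply/imsetP; exists (i, j) => //.
    rewrite inE; apply/asboolP; apply: inJ.
      by case: hc => /andP [h1 h2]; apply/andP; split; lra.
    by case: hc => /andP [h1 h2]; apply/andP; split; lra.
  apply: (leq_trans (subset_leq_card sub)).
  apply: leq_trans (leq_imset_card _ _) _.
  by rewrite /K /= -ltnS.
have hB : (P Bad <= delta%:E)%E.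
  apply: le_trans; first by apply: P_bigU => m; exact: badJ_measurable.
  apply: le_trans.
    apply: (@lee_sum _ _ _ (fun _ => (expR (- K%:R))%:E)) => m _.
    apply: le_trans; first exact: (bad_bound _ _ _ P _ _ Z sigma (J m) (2 * w) K hA s0 (mJ m) (hJ m) (ltW (mulr_gt0 (ltr0Sn _ 1) w0))).
    rewrite lee_fin; apply: binom_bound => //.
    by apply: le_trans KX; rewrite /X lerDl.
  rewrite sumEFin lee_fin sumr_const card_ord -[_ *+ M.+1]mulr_natr expRN mulrC.
  rewrite ler_pdivrMr ?expR_gt0 //.
  have : expR X <= expR K%:R by rewrite ler_expR.
  rewrite /X expRD lnK ?posrE ?divr_gt0 ?ltr0n //.
  have := expR_ge1Dx (e ^+ 2 * (N * q)).
  set a := e ^+ 2 * (N * q).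
  have a0' : 0 <= a by rewrite /a Nq mulr_ge0 ?exprn_ge0 ?ltW //; lra.
  move=> h1 h2.
  have h3 : M.+1%:R / delta <= expR K%:R.
    apply: le_trans h2; apply: ler_peMl; last lra.
    by rewrite divr_ge0 // ltW.
  by rewrite -ler_pdivrMl // mulrC.
rewrite probability_setC //.
move: hB (measure_ge0 P Bad); case: (P Bad) => [r||] //=.
  rewrite !lee_fin => h1 h2; lra.
by move=> _ _; rewrite addey // leey.
Qed.
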